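(* Let $R$ be a semiring and $\theta$ a congruence on $R$. The following are equivalent: (1) $\theta$ is a $k$-congruence; (2) $R/\theta$ has a zero $0_\theta$ and $\theta\subseteq \kappa_{0_\theta}$; (3) $R/\theta$ has a zero $0_\theta$ and $\theta=\kappa_{0_\theta}$. (Here the zero $0_\theta$ of $R/\theta$ is a $\theta$-class, i.e. a subset of $R$, and it is an ideal of $R$.)
   Context: A semiring $(R,+,\cdot)$ is a set with two binary operations such that $(R,+)$ is a commutative semigroup, $(R,\cdot)$ is a semigroup, and multiplication distributes over addition from both sides; no additive neutral element or identity is assumed. An element $0$ of a semiring $S$ is a zero of $S$ if $0+s=s$ and $0s=s0=0$ for all $s\in S$. An ideal of $R$ is a nonempty subset $A\subseteq R$ with $a+b\in A$ and $ra,ar\in A$ for all $a,b\in A$, $r\in R$. A congruence on $R$ is an equivalence relation $\equiv$ such that $a\equiv b$ implies $a+c\equiv b+c$, $ac\equiv bc$, $ca\equiv cb$ for all $a,b,c\in R$; $R/\theta$ denotes the quotient semiring of $\theta$-classes with $[x]+[y]=[x+y]$, $[x][y]=[xy]$. For an ideal $A$ of $R$, $\kappa_A$ is the congruence on $R$ defined by $x\,\kappa_A\,y$ iff $x+a=y+b$ for some $a,b\in A$. A congruence $\theta$ on $R$ is a $k$-congruence if $\theta=\kappa_A$ for some ideal $A$ of $R$. Throughout, $|R|\geq 2$. *)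

(* Defs.v *)
Set Implicit Arguments.

Section Semiring.
Variable R : Type.
Variables (add mul : R -> R -> R).

(* (R,+) commutative semigroup, (R,.) semigroup, two-sided distributivity;
   no neutral elements assumed. *)
Definition is_semiring : Prop :=
  (forall a b c, add a (add b c) = add (add a b) c) /\
  (forall a b, add a b = add b a) /\
  (forall a b c, mul a (mul b c) = mul (mul a b) c) /\
  (forall a b c, mul a (add b c) = add (mul a b) (mul a c)) /\
  (forall a b c, mul (add a b) c = add (mul a c) (mul b c)).

Definition is_ideal (A : R -> Prop) : Prop :=
  (exists a, A a) /\
  (forall a b, A a -> A b -> A (add a b)) /\
  (forall r a, A a -> A (mul r a) /\ A (mul a r)).

Definition is_congruence (theta : R -> R -> Prop) : Prop :=
  (forall a, theta a a) /\
  (forall a b, theta a b -> theta b a) /\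
  (forall a b c, theta a b -> theta b c -> theta a c) /\
  (forall a b c, theta a b ->
     theta (add a c) (add b c) /\ theta (mul a c) (mul b c) /\ theta (mul c a) (mul c b)).

Definition kappa (A : R -> Prop) (x y : R) : Prop :=
  exists a b, A a /\ A b /\ add x a = add y b.

Definition is_k_congruence (theta : R -> R -> Prop) : Prop :=
  exists A, is_ideal A /\ forall x y, theta x y <-> kappa A x y.

(* theta-class of z, i.e. the element [z] of R/theta viewed as a subset of R. *)
Definition cls (theta : R -> R -> Prop) (z : R) : R -> Prop := fun x => theta x z.

(* [z] is a zero of the quotient semiring R/theta:
   [z]+[s]=[s], [z][s]=[s][z]=[z] for all s, with [x]+[y]=[x+y], [x][y]=[xy]. *)
Definition is_quot_zero (theta : R -> R -> Prop) (z : R) : Prop :=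
  forall s, theta (add z s) s /\ theta (mul z s) z /\ theta (mul s z) z.

End Semiring.

(* Main.v *)
Require Import Defs.

Theorem theorem3p3 (R : Type) (add mul : R -> R -> R)
  (HR : is_semiring add mul) (Hcard : exists x y : R, x <> y)
  (theta : R -> R -> Prop) (Htheta : is_congruence add mul theta) :
  (is_k_congruence add mul theta <->
     (exists z, is_quot_zero add mul theta z /\
        forall x y, theta x y -> kappa add (cls theta z) x y)) /\
  (is_k_congruence add mul theta <->
     (exists z, is_quot_zero add mul theta z /\
        forall x y, theta x y <-> kappa add (cls theta z) x y)).
Proof.
  destruct HR as [aA [aC [mA [dl dr]]]].
  destruct Htheta as [refl [sym [trans comp]]].
  unfold is_quot_zero, kappa, cls, is_k_congruence, is_ideal.
  assert (addl : forall a b c, theta a b -> theta (add c a) (add c b)).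
  { intros a b c H. rewrite (aC c a), (aC c b). apply (comp _ _ _ H). }
  assert (L1 : forall z, (forall s, theta (add z s) s /\ theta (mul z s) z /\ theta (mul s z) z) ->
     forall x y, (exists a b, theta a z /\ theta b z /\ add x a = add y b) -> theta x y).
  { intros z Hz x y [c [d [Hc [Hd He]]]].
    assert (H1 : theta x (add x c)).
    { apply trans with (add x z).
      - apply sym. rewrite aC. apply Hz.
      - apply addl. apply sym; exact Hc. }
    assert (H2 : theta (add y d) y).
    { apply trans with (add y z).
      - apply addl. exact Hd.
      - rewrite aC. apply Hz. }
    rewrite He in H1. eapply trans; eassumption. }
  assert (L2 : forall z, (forall s, theta (add z s) s /\ theta (mul z s) z /\ theta (mul s z) z) ->
     (forall x y, theta x y <-> (exists a b, theta a z /\ theta b z /\ add x a = add y b)) ->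
     exists A : R -> Prop, ((exists a, A a) /\ (forall a b, A a -> A b -> A (add a b)) /\
        (forall r a, A a -> A (mul r a) /\ A (mul a r))) /\
        forall x y, theta x y <-> (exists a b, A a /\ A b /\ add x a = add y b)).
  { intros z Hz Heq. exists (fun x => theta x z). split; [|exact Heq].
    split; [exists z; apply refl|split].
    - intros a b Ha Hb. apply trans with (add z z).
      + apply trans with (add a z). apply addl; exact Hb. apply comp; exact Ha.
      + apply Hz.
    - intros r a Ha. split.
      + apply trans with (mul r z). apply comp; exact Ha. apply Hz.
      + apply trans with (mul z r). apply comp; exact Ha. apply Hz. }
  assert (L3 : (exists A : R -> Prop, ((exists a, A a) /\ (forall a b, A a -> A b -> A (add a b)) /\
        (forall r a, A a -> A (mul r a) /\ A (mul a r))) /\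
        forall x y, theta x y <-> (exists a b, A a /\ A b /\ add x a = add y b)) ->
     exists z, (forall s, theta (add z s) s /\ theta (mul z s) z /\ theta (mul s z) z) /\
     forall x y, theta x y <-> (exists a b, theta a z /\ theta b z /\ add x a = add y b)).
  { intros [A [[[a Ha] [Hadd Hmul]] Heq]]. exists a.
    assert (Hz : forall s, theta (add a s) s /\ theta (mul a s) a /\ theta (mul s a) a).
    { intros s. split; [|split].
      - apply Heq. exists a, (add a a). repeat split; auto.
        rewrite (aC a s), <- aA. reflexivity.
      - apply Heq. exists a, (mul a s). split; [exact Ha|split; [exact (proj2 (Hmul s a Ha))|apply aC]].
      - apply Heq. exists a, (mul s a). split; [exact Ha|split; [exact (proj1 (Hmul s a Ha))|apply aC]]. }
    split; [exact Hz|]. intros x y. split.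
    - intros Hxy. apply Heq in Hxy. destruct Hxy as [c [d [Hc [Hd He]]]].
      exists c, d. split; [|split; [|exact He]]; apply Heq.
      + exists a, c. split; [exact Ha|split; [exact Hc|apply aC]].
      + exists a, d. split; [exact Ha|split; [exact Hd|apply aC]].
    - apply L1; exact Hz. }
  split; split.
  - intros H. destruct (L3 H) as [z [Hz Heq]]. exists z. split; auto. intros; apply Heq; auto.
  - intros [z [Hz Hs]]. apply (L2 z Hz). intros x y; split; auto. apply L1; auto.
  - intros H. exact (L3 H).
  - intros [z [Hz Heq]]. exact (L2 z Hz Heq).
Qed.
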